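(* Let $X,Y\in su(2)\cong\mathbb R^3$ be unit vectors with angle $\alpha\in(0,\pi)$ between them. (a) If $s_1,s_2\in\mathbb R$ satisfy $\cos(\alpha)\tan(s_1)\tan(s_2)=1$, then $\varphi(\exp(s_1X)\exp(s_2Y))$ is a rotation by angle $\pi$, and $\exp(s_1X)\exp(s_2Y)=-\exp(-s_2Y)\exp(-s_1X)$. (b) Let $s_1,s_2,s_3\in\mathbb R$ with $\cos s_2\neq0$, and let $\psi\in(-\pi/2,\pi/2]$ satisfy $\tan\psi=\cos\alpha\tan s_2$. Then $\exp(s_1X)\exp(s_2Y)\exp(s_3X)=\exp(s_1'X)\exp(-s_2Y)\exp(s_3'X)$, where $s_1'=s_1+\psi-\frac{\pi}{2}$ and $s_3'=s_3+\psi+\frac{\pi}{2}$.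
   Context: $SU(2)$ is the group of unit quaternions, $su(2)$ the pure quaternions $\mathrm{span}\{i,j,k\}$ identified with $\mathbb R^3$ via $i\mapsto e_1,j\mapsto e_2,k\mapsto e_3$ (so the Euclidean inner product and angles transfer). For a unit pure quaternion $X$, $\exp(sX)=\cos s+X\sin s$ (exponential in $\mathbb H$). $\varphi:SU(2)\to SO(3)$ is the double cover with $\varphi(\exp(v))=R(2v)$, $R(w)$ being rotation by angle $|w|$ about $w/|w|$. *)

(* Defs.v *)
From Stdlib Require Export Reals.
Open Scope R_scope.

(* Vectors of R^3 (identified with su(2) = span{i,j,k} via i,j,k -> e1,e2,e3). *)
Record vec3 := V3 { vx : R; vy : R; vz : R }.

Definition vdot (u v : vec3) : R := vx u * vx v + vy u * vy v + vz u * vz v.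
Definition vcross (u v : vec3) : vec3 :=
  V3 (vy u * vz v - vz u * vy v) (vz u * vx v - vx u * vz v) (vx u * vy v - vy u * vx v).
Definition vscale (a : R) (v : vec3) : vec3 := V3 (a * vx v) (a * vy v) (a * vz v).
Definition vadd (u v : vec3) : vec3 := V3 (vx u + vx v) (vy u + vy v) (vz u + vz v).
Definition vnorm (v : vec3) : R := sqrt (vdot v v).
Definition is_unit (v : vec3) : Prop := vdot v v = 1.

Record quat := Q { qre : R; qi : R; qj : R; qk : R }.

Definition qmul (p q : quat) : quat :=
  Q (qre p * qre q - qi p * qi q - qj p * qj q - qk p * qk q)
    (qre p * qi q + qi p * qre q + qj p * qk q - qk p * qj q)
    (qre p * qj q - qi p * qk q + qj p * qre q + qk p * qi q)
    (qre p * qk q + qi p * qj q - qj p * qi q + qk p * qre q).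
Definition qopp (p : quat) : quat := Q (- qre p) (- qi p) (- qj p) (- qk p).
Definition qconj (p : quat) : quat := Q (qre p) (- qi p) (- qj p) (- qk p).

Definition pure (v : vec3) : quat := Q 0 (vx v) (vy v) (vz v).
Definition vecpart (p : quat) : vec3 := V3 (qi p) (qj p) (qk p).

(* exp(s X) = cos s + X sin s for a unit pure quaternion X *)
Definition qexp (s : R) (X : vec3) : quat :=
  Q (cos s) (sin s * vx X) (sin s * vy X) (sin s * vz X).

(* rotation by angle theta about the unit axis u (Rodrigues formula) *)
Definition rot_axis_angle (u : vec3) (theta : R) (v : vec3) : vec3 :=
  vadd (vadd (vscale (cos theta) v) (vscale (sin theta) (vcross u v)))
       (vscale ((1 - cos theta) * vdot u v) u).

Definition Rw (w : vec3) (v : vec3) : vec3 :=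
  if Req_EM_T (vnorm w) 0 then v
  else rot_axis_angle (vscale (/ vnorm w) w) (vnorm w) v.

(* double cover phi : SU(2) -> SO(3), phi(q) v = q v q^{-1} = q v conj(q)
   (so that phi(exp v) = R(2v)) *)
Definition phi (q : quat) (v : vec3) : vec3 := vecpart (qmul (qmul q (pure v)) (qconj q)).

Definition is_rotation_by_pi (f : vec3 -> vec3) : Prop :=
  exists w : vec3, vnorm w = PI /\ forall v, f v = Rw w v.

(* Main.v *)
Require Import Defs.
From Stdlib Require Import Reals.
From Stdlib Require Import Lra Psatz.
Open Scope R_scope.

Lemma cert1 (l r q1 p1 : R) : p1 = 0 -> l - r = q1*p1 -> l = r.
Proof. intros -> H. lra. Qed.

Lemma cert3 (l r q1 q2 q3 p1 p2 p3 : R) : p1 = 0 -> p2 = 0 -> p3 = 0 ->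
  l - r = q1*p1+q2*p2+q3*p3 -> l = r.
Proof. intros -> -> -> H. lra. Qed.

Lemma qmul_assoc p q r : qmul (qmul p q) r = qmul p (qmul q r).
Proof. destruct p, q, r; unfold qmul; simpl; f_equal; ring. Qed.

Lemma qexp_add (X : vec3) u v : is_unit X ->
  qexp (u + v) X = qmul (qexp u X) (qexp v X).
Proof.
intro hX. unfold is_unit, vdot in hX. destruct X as [x1 x2 x3]; simpl in *.
assert (g : x1*x1+x2*x2+x3*x3-1 = 0) by lra.
unfold qexp, qmul; simpl. rewrite cos_plus, sin_plus. f_equal.
- apply (cert1 _ _ (sin u * sin v) _ g). ring.
- ring. - ring. - ring.
Qed.

Definition qN (p : quat) := qre p * qre p + qi p * qi p + qj p * qj p + qk p * qk p.

Lemma qN_mul p q : qN (qmul p q) = qN p * qN q.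
Proof. destruct p, q; unfold qN, qmul; simpl; ring. Qed.

Lemma qN_exp s X : is_unit X -> qN (qexp s X) = 1.
Proof.
intro hX. unfold is_unit, vdot in hX. destruct X as [x1 x2 x3]; simpl in *.
unfold qN, qexp; simpl.
pose proof (sin2_cos2 s) as h. unfold Rsqr in h.
replace (cos s * cos s + sin s * x1 * (sin s * x1) + sin s * x2 * (sin s * x2) +
   sin s * x3 * (sin s * x3)) with (cos s * cos s + sin s * sin s * (x1*x1+x2*x2+x3*x3)) by ring.
rewrite hX. lra.
Qed.

Lemma rot_pure u1 u2 u3 v : u1*u1+u2*u2+u3*u3 = 1 ->
  phi (Q 0 u1 u2 u3) v = Rw (vscale PI (V3 u1 u2 u3)) v.
Proof.
intro hu.
assert (hPI := PI_RGT_0).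
assert (hn : vnorm (vscale PI (V3 u1 u2 u3)) = PI).
{ unfold vnorm, vdot, vscale; simpl.
  replace (PI * u1 * (PI * u1) + PI * u2 * (PI * u2) + PI * u3 * (PI * u3))
    with (PI * PI * (u1*u1+u2*u2+u3*u3)) by ring.
  rewrite hu, Rmult_1_r. apply sqrt_square. lra. }
unfold Rw. rewrite hn. destruct (Req_EM_T PI 0) as [e|_]; [lra|].
assert (hs : vscale (/ PI) (vscale PI (V3 u1 u2 u3)) = V3 u1 u2 u3).
{ unfold vscale; simpl; f_equal; field; lra. }
rewrite hs. unfold rot_axis_angle. rewrite cos_PI, sin_PI.
assert (g : u1*u1+u2*u2+u3*u3-1 = 0) by lra.
destruct v as [v1 v2 v3].
unfold phi, vecpart, qmul, pure, qconj, vadd, vscale, vcross, vdot; simpl. f_equal.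
- apply (cert1 _ _ (-v1) _ g). ring.
- apply (cert1 _ _ (-v2) _ g). ring.
- apply (cert1 _ _ (-v3) _ g). ring.
Qed.

Lemma mid (X Y : vec3) s2 psi : is_unit X ->
  sin psi * cos s2 = vdot X Y * cos psi * sin s2 ->
  qmul (qmul (qexp (psi - PI/2) X) (qexp (- s2) Y)) (qexp (psi + PI/2) X) = qexp s2 Y.
Proof.
intros hX h3.
unfold is_unit, vdot in hX, h3. destruct X as [x1 x2 x3], Y as [y1 y2 y3]; simpl in *.
assert (g1 : x1*x1+x2*x2+x3*x3-1 = 0) by lra.
pose proof (sin2_cos2 psi) as h2. unfold Rsqr in h2.
assert (g2 : sin psi*sin psi+cos psi*cos psi-1 = 0) by lra.
assert (g3 : sin psi*cos s2-(x1*y1+x2*y2+x3*y3)*cos psi*sin s2 = 0) by lra.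
unfold qexp, qmul; simpl.
rewrite cos_minus, sin_minus, cos_plus, sin_plus, cos_PI2, sin_PI2, cos_neg, sin_neg.
set (a := sin psi) in *. set (b := cos psi) in *. set (c := cos s2) in *. set (s := sin s2) in *.
f_equal.
- apply (cert3 _ _ (b*b*c) c (-2*a) _ _ _ g1 g2 g3). ring.
- apply (cert3 _ _ (b*b*s*y1) (s*y1) (2*x1*b) _ _ _ g1 g2 g3). ring.
- apply (cert3 _ _ (b*b*s*y2) (s*y2) (2*x2*b) _ _ _ g1 g2 g3). ring.
- apply (cert3 _ _ (b*b*s*y3) (s*y3) (2*x3*b) _ _ _ g1 g2 g3). ring.
Qed.

Theorem proposition4p2 (X Y : vec3) (alpha : R)
  (hX : is_unit X) (hY : is_unit Y)
  (halpha : 0 < alpha < PI) (hangle : vdot X Y = cos alpha) :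
  (forall s1 s2 : R,
     cos s1 <> 0 -> cos s2 <> 0 ->
     cos alpha * tan s1 * tan s2 = 1 ->
     is_rotation_by_pi (phi (qmul (qexp s1 X) (qexp s2 Y))) /\
     qmul (qexp s1 X) (qexp s2 Y) = qopp (qmul (qexp (- s2) Y) (qexp (- s1) X)))
  /\
  (forall s1 s2 s3 psi : R,
     cos s2 <> 0 ->
     - (PI / 2) < psi <= PI / 2 ->
     cos psi <> 0 ->
     tan psi = cos alpha * tan s2 ->
     qmul (qmul (qexp s1 X) (qexp s2 Y)) (qexp s3 X)
     = qmul (qmul (qexp (s1 + psi - PI / 2) X) (qexp (- s2) Y)) (qexp (s3 + psi + PI / 2) X)).
Proof.
split.
- intros s1 s2 c1 c2 h.
  assert (hr : cos s1 * cos s2 - vdot X Y * sin s1 * sin s2 = 0).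
  { rewrite hangle. unfold tan in h.
    replace (cos alpha * sin s1 * sin s2) with
      ((cos alpha * (sin s1 / cos s1) * (sin s2 / cos s2)) * (cos s1 * cos s2)) by (field; auto).
    rewrite h. ring. }
  assert (hre : qre (qmul (qexp s1 X) (qexp s2 Y)) = 0).
  { destruct X as [x1 x2 x3], Y as [y1 y2 y3]; unfold vdot in hr; simpl in *.
    unfold qexp, qmul; simpl. rewrite <- hr. ring. }
  split.
  + assert (hN := qN_mul (qexp s1 X) (qexp s2 Y)).
    rewrite (qN_exp _ _ hX), (qN_exp _ _ hY) in hN.
    destruct (qmul (qexp s1 X) (qexp s2 Y)) as [r u1 u2 u3].
    simpl in hre. subst r. unfold qN in hN; simpl in hN.
    exists (vscale PI (V3 u1 u2 u3)). split.
    * unfold vnorm, vdot, vscale; simpl.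
      replace (PI * u1 * (PI * u1) + PI * u2 * (PI * u2) + PI * u3 * (PI * u3))
        with (PI * PI * (u1*u1+u2*u2+u3*u3)) by ring.
      replace (u1*u1+u2*u2+u3*u3) with 1 by lra. rewrite Rmult_1_r.
      apply sqrt_square. pose proof PI_RGT_0; lra.
    * intro v. apply rot_pure. lra.
  + destruct X as [x1 x2 x3], Y as [y1 y2 y3]; unfold vdot in hr; simpl in *.
    unfold qexp, qmul, qopp; simpl. rewrite !cos_neg, !sin_neg. f_equal.
    * apply (cert1 _ _ 2 _ hr). ring.
    * ring. * ring. * ring.
- intros s1 s2 s3 psi c2 _ cpsi h.
  assert (h3 : sin psi * cos s2 = vdot X Y * cos psi * sin s2).
  { rewrite hangle. unfold tan in h.
    replace (sin psi) with (sin psi / cos psi * cos psi) by (field; auto).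
    rewrite h. field. auto. }
  replace (s1 + psi - PI / 2) with (s1 + (psi - PI/2)) by ring.
  replace (s3 + psi + PI / 2) with ((psi + PI/2) + s3) by ring.
  rewrite (qexp_add X s1 (psi - PI/2) hX), (qexp_add X (psi + PI/2) s3 hX).
  rewrite <- (mid X Y s2 psi hX h3).
  rewrite !qmul_assoc. reflexivity.
Qed.
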